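(* There exist absolute constants $c>0$ and $\rho_0\in(0,1/2]$ such that, for all $\rho\in(0,\rho_0]$, $n\ge2$, $1\le m\le n-1$ and $s\in\big(0,1/(m\ln(1/\rho))\big]$, $$\mathcal{E}^{\mathrm{TW}}_{m,s}\ge(c/s)^m(1/\rho)^{\lfloor(n+m-1)/2\rfloor}.$$
   Context: $m$-twist system with parameter $\rho$ on $n$ agents: at each time $t$ the agents are relabeled so that their positions satisfy $x_1\le\dots\le x_n$. A partition of $[n]$ into at most $m$ intervals of consecutive indices $[u_{t,l},v_{t,l}]$ (blocks) is chosen. The next sorted positions $y_1\le\dots\le y_n$ satisfy, for every block $[u,v]$ and $i\in[u,v]$, $$(1-\rho)x_u+\rho x_{\min\{i+1,v\}}\le y_i\le\rho x_{\max\{i-1,u\}}+(1-\rho)x_v.$$ The $s$-energy is $\sum_{t\ge0}\sum_l(x_{v_{t,l}}(t)-x_{u_{t,l}}(t))^s$. $\mathcal{E}^{\mathrm{TW}}_{m,s}$ is its supremum over all $m$-twist systems on $n$ agents with initial positions in $[0,1]$. *)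

(* Defs.v *)
From HB Require Import structures.
From mathcomp Require Import all_boot all_order all_algebra.
From mathcomp Require Import all_classical all_reals all_analysis.
Set Implicit Arguments. Unset Strict Implicit. Unset Printing Implicit Defensive.
Import Order.TTheory GRing.Theory Num.Theory.
Local Open Scope ring_scope.

(* Agents are indexed 0..n-1 (paper: 1..n).  A block is a pair (u, v) of
   indices, standing for the interval [u, v]. *)

Definition interval_partition (n m : nat) (B : seq (nat * nat)) : Prop :=
  (size B <= m)%N /\
  (forall b, b \in B -> (b.1 <= b.2)%N /\ (b.2 < n)%N) /\
  (forall i, (i < n)%N -> count (fun b : nat * nat => (b.1 <= i <= b.2)%N) B = 1%N).

(* x t i = i-th smallest position at time t; B t = partition chosen at time t. *)
Definition twist_system (R : realType) (n m : nat) (rho : R)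
    (x : nat -> nat -> R) (B : nat -> seq (nat * nat)) : Prop :=
  (forall t i j, (i <= j)%N -> (j < n)%N -> x t i <= x t j) /\
  (forall t, interval_partition n m (B t)) /\
  (forall t b i, b \in B t -> (b.1 <= i <= b.2)%N ->
     (1 - rho) * x t b.1 + rho * x t (minn i.+1 b.2) <= x t.+1 i /\
     x t.+1 i <= rho * x t (maxn i.-1 b.1) + (1 - rho) * x t b.2).

Definition initial_in_unit (R : realType) (n : nat) (x : nat -> nat -> R) : Prop :=
  forall i, (i < n)%N -> 0 <= x 0%N i <= 1.

Definition s_energy (R : realType) (s : R)
    (x : nat -> nat -> R) (B : nat -> seq (nat * nat)) : \bar R :=
  (\sum_(0 <= t <oo) (\sum_(b <- B t) ((x t b.2 - x t b.1) `^ s))%:E)%E.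

Definition twist_energy_sup (R : realType) (n m : nat) (rho s : R) : \bar R :=
  ereal_sup [set E | exists x B, twist_system n m rho x B /\
                                  initial_in_unit n x /\ E = s_energy s x B].

(* Main.v *)
Require Import Defs.
From HB Require Import structures.
From mathcomp Require Import all_boot all_order all_algebra.
From mathcomp Require Import all_classical all_reals all_analysis.
From mathcomp Require Import zify ring lra.
Import Order.TTheory GRing.Theory Num.Theory.
Set Implicit Arguments. Unset Strict Implicit.
Local Open Scope ring_scope.

Section Constr.
Variable R : realType.

Definition sortedc (n : nat) (x : nat -> R) :=
  forall i j, (i <= j)%N -> (j < n)%N -> x i <= x j.

Definition stepc n m (rho : R) (x : nat -> R) B (y : nat -> R) : Prop :=
  sortedc n x /\ sortedc n y /\ interval_partition n m B /\
  (forall b i, b \in B -> (b.1 <= i <= b.2)%N ->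
     (1 - rho) * x b.1 + rho * x (minn i.+1 b.2) <= y i /\
     y i <= rho * x (maxn i.-1 b.1) + (1 - rho) * x b.2).

Definition benergy (s : R) (x : nat -> R) (B : seq (nat * nat)) : R :=
  \sum_(b <- B) (x b.2 - x b.1) `^ s.

Inductive reach n m (rho s : R) : (nat -> R) -> (nat -> R) -> R -> Prop :=
| reach_refl x : reach n m rho s x x 0
| reach_step x B y z e : stepc n m rho x B y -> reach n m rho s y z e ->
    reach n m rho s x z (benergy s x B + e)
| reach_weak x z e e' : reach n m rho s x z e -> e' <= e -> reach n m rho s x z e'.

Lemma benergy_ge0 s x B : 0 <= benergy s x B.
Proof. by apply: sumr_ge0 => b _; exact: powR_ge0. Qed.

Lemma reach_trans n m rho s x y z e1 e2 :
  reach n m rho s x y e1 -> reach n m rho s y z e2 -> reach n m rho s x z (e1 + e2).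
Proof.
elim=> {x y e1} [x|x B y y' e st _ IH|x y e e' _ IH le] H.
- by rewrite add0r.
- by rewrite -addrA; apply: reach_step st (IH H).
- by apply: reach_weak (IH H) _; rewrite lerD2r.
Qed.

Lemma reach_one n m rho s x B y : stepc n m rho x B y ->
  reach n m rho s x y (benergy s x B).
Proof. by move=> st; rewrite -[benergy _ _ _]addr0; apply: reach_step st (reach_refl _ _ _ _ _). Qed.

Definition constf (p : R) : nat -> R := fun=> p.

Lemma stepc_const n m rho p : (0 < n)%N -> (1 <= m)%N ->
  stepc n m rho (constf p) [:: (0%N, n.-1)] (constf p).
Proof.
move=> n0 m1; split; first by move=> *; rewrite /constf.
split; first by move=> *; rewrite /constf.
split.
  split; first by [].
  split; first by move=> b; rewrite inE => /eqP -> /=; lia.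
  by move=> i lin /=; have -> : (i <= n.-1)%N by lia.
by move=> b i _ _; rewrite /constf; split; nra.
Qed.

Lemma stepc_twist n m rho (X : nat -> nat -> R) Bs :
  (forall t, stepc n m rho (X t) (Bs t) (X t.+1)) -> twist_system n m rho X Bs.
Proof.
move=> H; split; first by move=> t i j; case: (H t) => + _; apply.
split; first by move=> t; case: (H t) => _ [_ [? _]].
by move=> t b i; case: (H t) => _ [_ [_ ?]]; auto.
Qed.

Lemma s_energy_ge0 (s : R) (X : nat -> nat -> R) Bs : (0 <= s_energy s X Bs)%E.
Proof. by apply: nneseries_ge0 => k _ _; rewrite lee_fin; exact: benergy_ge0. Qed.

Lemma reach_system n m rho s x p e : (0 < n)%N -> (1 <= m)%N ->
  reach n m rho s x (constf p) e ->
  exists X Bs, twist_system n m rho X Bs /\ X 0%N = x /\ (e%:E <= s_energy s X Bs)%E.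
Proof.
move=> n0 m1 H.
suff: forall z, reach n m rho s x z e -> z = constf p ->
  exists X Bs, (forall t, stepc n m rho (X t) (Bs t) (X t.+1)) /\ X 0%N = x /\
     (e%:E <= s_energy s X Bs)%E.
  move=> /(_ _ H erefl) [X [Bs [h1 [h2 h3]]]].
  by exists X, Bs; split => //; apply: stepc_twist.
move=> z {}H; elim: H => {x z e} [x|x B y z e st _ IH|x z e e' _ IH le] zE.
- exists (fun=> x), (fun=> [:: (0%N, n.-1)]); split.
    by move=> t; rewrite zE; apply: stepc_const.
  by split => //; exact: s_energy_ge0.
- have [X [Bs [h1 [h2 h3]]]] := IH zE.
  exists (fun t => if t is t'.+1 then X t' else x),
         (fun t => if t is t'.+1 then Bs t' else B); split.
    by case=> [|t] //=; rewrite h2.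
  split => //.
  rewrite /s_energy (nneseries_split 0 1); last by move=> k _; rewrite lee_fin benergy_ge0.
  rewrite add0n big_nat1 /= -(nneseries_addn 1); last by move=> k; rewrite lee_fin benergy_ge0.
  rewrite EFinD; apply: leeD => //.
  by rewrite (@eq_eseriesr _ _ (fun i => (benergy s (X i) (Bs i))%:E)) // => i _; rewrite addn1.
- have [X [Bs [h1 [h2 h3]]]] := IH zE.
  by exists X, Bs; split => //; split => //; apply: le_trans h3; rewrite lee_fin.
Qed.

End Constr.

Section Constr2.
Variable R : realType.

Definition aff (a l : R) (x : nat -> R) : nat -> R := fun i => a + l * x i.

Lemma stepc_aff n m rho (x : nat -> R) B y a l : 0 < l ->
  stepc n m rho x B y -> stepc n m rho (aff a l x) B (aff a l y).
Proof.
move=> l0 [sx [sy [pB H]]]; split.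
  by move=> i j ij jn; rewrite /aff lerD2l ler_pM2l // sx.
split; first by move=> i j ij jn; rewrite /aff lerD2l ler_pM2l // sy.
split => // b i hb hi; have [h1 h2] := H b i hb hi; rewrite /aff; split; nra.
Qed.

Lemma part_block n m B b : interval_partition n m B -> b \in B ->
  (b.1 <= b.2)%N /\ (b.2 < n)%N.
Proof. by case=> _ [+ _]; apply. Qed.

Lemma benergy_aff n m rho (x : nat -> R) B y a l s : 0 < l ->
  stepc n m rho x B y -> benergy s (aff a l x) B = l `^ s * benergy s x B.
Proof.
move=> l0 [sx [_ [pB _]]]; rewrite /benergy big_distrr /=.
apply: eq_big_seq => b hb; have [h1 h2] := part_block pB hb.
have hx := sx _ _ h1 h2.
rewrite /aff (_ : a + l * x b.2 - (a + l * x b.1) = l * (x b.2 - x b.1)); last by ring.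
rewrite powRM //; [exact: ltW | by rewrite subr_ge0].
Qed.

Lemma reach_aff n m rho s (x z : nat -> R) e a l : 0 < l ->
  reach n m rho s x z e -> reach n m rho s (aff a l x) (aff a l z) (l `^ s * e).
Proof.
move=> l0; elim=> {x z e} [x|x B y z e st _ IH|x z e e' _ IH le].
- by rewrite mulr0; exact: reach_refl.
- rewrite mulrDr -(benergy_aff a s l0 st); apply: reach_step IH.
  exact: stepc_aff.
- by apply: reach_weak IH _; rewrite ler_wpM2l // powR_ge0.
Qed.

Lemma part_cover n m B i : interval_partition n m B -> (i < n)%N ->
  exists2 b, b \in B & (b.1 <= i <= b.2)%N.
Proof.
case=> _ [_ H] /H hc; apply/hasP; rewrite has_count hc //.
Qed.

Lemma stepc_top n m rho (x : nat -> R) B y : (0 < n)%N -> 0 <= rho <= 1 ->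
  stepc n m rho x B y -> y n.-1 <= x n.-1.
Proof.
move=> n0 /andP[r0 r1] [sx [_ [pB H]]].
have [b hb hi] : exists2 b, b \in B & (b.1 <= n.-1 <= b.2)%N.
  by apply: part_cover pB _; lia.
have [h1 h2] := part_block pB hb.
have e2 : b.2 = n.-1 by lia.
have [_ hu] := H b _ hb hi.
have : x (maxn n.-1.-1 b.1) <= x n.-1 by apply: sx; lia.
rewrite e2 in hu; nra.
Qed.

Lemma reach_top n m rho s (x z : nat -> R) e : (0 < n)%N -> 0 <= rho <= 1 ->
  reach n m rho s x z e -> z n.-1 <= x n.-1.
Proof.
move=> n0 hr; elim=> {x z e} [x|x B y z e st _ IH|x z e e' _ IH le] //.
by apply: le_trans IH (stepc_top n0 hr st).
Qed.

Definition ext (n' : nat) (x : nat -> R) (q : R) : nat -> R :=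
  fun i => if i == n' then q else x i.

Lemma ext_lt n' x q k : (k < n')%N -> ext n' x q k = x k.
Proof. by move=> h; rewrite /ext ifN // neq_ltn h. Qed.

Lemma ext_top n' x q : ext n' x q n' = q.
Proof. by rewrite /ext eqxx. Qed.

Lemma sorted_ext n' x q : (0 < n')%N -> sortedc n' x -> x n'.-1 <= q ->
  sortedc n'.+1 (ext n' x q).
Proof.
move=> n0 sx xq i j ij jn.
have [->|jn'] := eqVneq j n'.
  rewrite ext_top; have [->|in'] := eqVneq i n'; first by rewrite ext_top.
  rewrite ext_lt; last by lia.
  by apply: le_trans xq; apply: sx; lia.
rewrite !ext_lt; try lia; apply: sx; lia.
Qed.

Lemma stepc_ext n' m' rho (x : nat -> R) B y q : (0 < n')%N -> 0 <= rho <= 1 ->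
  stepc n' m' rho x B y -> x n'.-1 <= q ->
  stepc n'.+1 m'.+1 rho (ext n' x q) (rcons B (n', n')) (ext n' y q).
Proof.
move=> n0 hr st xq; have yq := le_trans (stepc_top n0 hr st) xq.
case: st => [sx [sy [pB H]]].
split; first exact: sorted_ext.
split; first exact: sorted_ext.
split.
  case: pB => [sz [inr cnt]]; split; first by rewrite size_rcons.
  split.
    move=> b; rewrite mem_rcons inE => /orP[/eqP -> /=|/inr [? ?]]; split => //; exact: ltnW.
  move=> i ilt; rewrite -cats1 count_cat /=.
  have [->|ne] := eqVneq i n'.
    rewrite leqnn /=.
    suff -> : count (fun b : nat * nat => (b.1 <= n' <= b.2)%N) B = 0%N by [].
    apply/eqP; rewrite -leqn0 leqNgt -has_count; apply/hasPn => b /inr [h1 h2]; apply/negP => /andP [_ h]; by move: h; rewrite leqNgt h2.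
  rewrite cnt; last by lia.
  by have -> : (n' <= i)%N = false by lia.
move=> b i; rewrite mem_rcons inE => /orP[/eqP -> /= hi|hb hi].
  have -> : i = n' by lia.
  rewrite (_ : minn n'.+1 n' = n'); last by lia.
  rewrite (_ : maxn n'.-1 n' = n'); last by lia.
  rewrite !ext_top; split; nra.
have [h1 h2] := part_block pB hb.
rewrite !ext_lt; try lia.
exact: H.
Qed.

Lemma benergy_ext n' m' rho (x : nat -> R) B y q s : s != 0 ->
  stepc n' m' rho x B y ->
  benergy s (ext n' x q) (rcons B (n', n')) = benergy s x B.
Proof.
move=> s0 [_ [_ [pB _]]].
rewrite /benergy -cats1 big_cat big_seq1 /= ext_top subrr powR0 // addr0.
apply: eq_big_seq => b hb; have [h1 h2] := part_block pB hb.
by rewrite !ext_lt //; exact: leq_ltn_trans h1 h2.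
Qed.

Lemma reach_ext n' m' rho s (x z : nat -> R) e q : (0 < n')%N -> 0 <= rho <= 1 ->
  s != 0 -> reach n' m' rho s x z e -> x n'.-1 <= q ->
  reach n'.+1 m'.+1 rho s (ext n' x q) (ext n' z q) e.
Proof.
move=> n0 hr s0; elim=> {x z e} [x|x B y z e st _ IH|x z e e' _ IH le] xq.
- exact: reach_refl.
- rewrite -(benergy_ext q s0 st); apply: reach_step (stepc_ext n0 hr st xq) _.
  by apply: IH; apply: le_trans (stepc_top n0 hr st) xq.
- exact: reach_weak (IH xq) le.
Qed.

Lemma part_full n m : (0 < n)%N -> (1 <= m)%N -> interval_partition n m [:: (0%N, n.-1)].
Proof.
move=> n0 m1; split; first by [].
split; first by move=> b; rewrite inE => /eqP -> /=; lia.
by move=> i lin /=; have -> : (i <= n.-1)%N by lia.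
Qed.

Lemma stepc_collapse n m rho (x : nat -> R) : (0 < n)%N -> (1 <= m)%N ->
  0 <= rho <= 2^-1 -> sortedc n x ->
  stepc n m rho x [:: (0%N, n.-1)] (constf ((1 - rho) * x 0%N + rho * x n.-1)).
Proof.
move=> n0 m1 /andP[r0 r1] sx; split => //.
split; first by move=> *; rewrite /constf.
split; first exact: part_full.
move=> b i; rewrite inE => /eqP -> /= hi; rewrite /constf.
have h0 : x 0%N <= x n.-1 by apply: sx; lia.
have h1 : x (minn i.+1 n.-1) <= x n.-1 by apply: sx; lia.
have h2 : x 0%N <= x (maxn i.-1 0) by apply: sx; lia.
split; nra.
Qed.

Lemma ext_const_bounds n' (P q : R) k : P <= q ->
  P <= ext n' (constf P) q k <= q.
Proof. by move=> Pq; rewrite /ext /constf; case: eqP => _; rewrite ?Pq ?lexx. Qed.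

Lemma stepc_refresh n' m rho (P q : R) (C : nat -> R) : (0 < n')%N -> (1 <= m)%N ->
  0 <= rho <= 2^-1 -> P <= q -> sortedc n'.+1 C ->
  (forall i, (i <= n')%N -> 0 <= C i <= 1) -> 2 * rho <= C n'.-1 ->
  stepc n'.+1 m rho (ext n' (constf P) q) [:: (0%N, n')]
     (aff P ((1 - rho) * (q - P)) C).
Proof.
move=> n0 m1 /andP[r0 r1] Pq sC Cb C2.
split; first by apply: sorted_ext => //; move=> *; rewrite /constf.
split.
  move=> i j ij jn; rewrite /aff lerD2l; apply: ler_wpM2l; first nra.
  exact: sC.
split; first exact: (part_full (n := n'.+1)).
move=> b i; rewrite inE => /eqP -> /= hi.
rewrite ext_lt // ext_top /aff; rewrite [constf P 0%N]/constf.
have [c0 c1] := andP (Cb i hi).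
have [e1 e2] := andP (ext_const_bounds n' (minn i.+1 n') Pq).
have [e3 e4] := andP (ext_const_bounds n' (maxn i.-1 0) Pq).
have hd : 0 <= q - P by rewrite subr_ge0.
have hd1 : 0 <= (1 - rho) * (q - P) by apply: mulr_ge0; lra.
split; last first.
  have : (1 - rho) * (q - P) * C i <= (1 - rho) * (q - P) * 1 by apply: ler_wpM2l.
  have : rho * P <= rho * ext n' (constf P) q (maxn i.-1 0) by apply: ler_wpM2l.
  lra.
have [lt|ge] := ltnP i.+1 n'.
  rewrite ext_lt; last by clear -lt; lia.
  rewrite /constf.
  have : 0 <= (1 - rho) * (q - P) * C i by apply: mulr_ge0.
  lra.
have : C n'.-1 <= C i by apply: sC; clear -ge hi n0; lia.
move=> hc.
have h : rho <= (1 - rho) * C i.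
  have : (1 - rho) * (2 * rho) <= (1 - rho) * C i by apply: ler_wpM2l; lra.
  nra.
have : rho * (q - P) <= (1 - rho) * C i * (q - P) by apply: ler_wpM2r.
have : rho * ext n' (constf P) q (minn i.+1 n') <= rho * q by apply: ler_wpM2l.
rewrite ext_top; lra.
Qed.

End Constr2.

Section Constr3.
Variable R : realType.

Lemma ln_le_sub1 (x : R) : 0 < x -> ln x <= x - 1.
Proof. move=> x0; have := expR_ge1Dx (ln x); rewrite lnK ?posrE //; lra. Qed.

Lemma ln_1m_ge (d : R) : 0 <= d <= 2^-1 -> - (2 * d) <= ln (1 - d).
Proof.
move=> /andP[d0 d1].
have h1 : 0 < 1 - d by lra.
have u0 : 0 < (1 - d)^-1 by rewrite invr_gt0.
have := ln_le_sub1 u0; rewrite lnV ?posrE // => h.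
have hu : (1 - d)^-1 * (1 - d) = 1 by rewrite mulVf // gt_eqF.
suff : (1 - d)^-1 - 1 <= 2 * d by lra.
nra.
Qed.

Lemma geo_bound (d s : R) : 0 < d <= 2^-1 -> 0 < s -> s * d <= 2^-1 ->
  exists N : nat, expR (-2) / (2 * s * d) <= N%:R * ((1 - d) ^+ N) `^ s.
Proof.
move=> /andP[d0 d1] s0 sd.
have sd0 : 0 < s * d by apply: mulr_gt0.
have hu : (s * d)^-1 * (s * d) = 1 by rewrite mulVf // gt_eqF.
have u0 : 0 < (s * d)^-1 by rewrite invr_gt0.
have [hN1 hN2] := andP (truncn_itv (ltW u0)).
move: (Num.Def.trunc _) hN1 hN2 => N hN1 hN2.
move: hu u0 hN1 hN2; set u := (s * d)^-1 => hu u0 hN1 hN2.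
exists N.
have h1d : 0 < 1 - d by lra.
rewrite /powR gt_eqF ?exprn_gt0 // lnXn // -[ln _ *+ N]mulr_natr.
have hl := ln_1m_ge (d := d) ltac:(apply/andP; split; lra).
have hN0 : 0 <= (N%:R : R) by [].
have h2 : - 2 <= s * (ln (1 - d) * N%:R).
  have : s * (- (2 * d) * N%:R) <= s * (ln (1 - d) * N%:R).
    by apply: ler_wpM2l; [lra | apply: ler_wpM2r].
  have : s * d * N%:R <= s * d * u by apply: ler_wpM2l; lra.
  nra.
have he : expR (-2) <= expR (s * (ln (1 - d) * N%:R)) by rewrite ler_expR.
have u2 : 2 <= u by nra.
have hN : u / 2 <= N%:R by lra.

have -> : expR (-2) / (2 * s * d) = u / 2 * expR (-2).
  by rewrite /u; field; apply/andP; split; rewrite gt_eqF.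
apply: ler_pM => //; try lra; exact: ltW (expR_gt0 _).
Qed.

Lemma powR_le (s x y : R) : 0 <= s -> 0 <= x -> x <= y -> x `^ s <= y `^ s.
Proof.
move=> s0 x0 xy; apply: (ge0_ler_powR s0); rewrite ?nnegrE //.
exact: le_trans xy.
Qed.

Lemma iterate n m rho s (C : nat -> R) (r K : R) : 0 < r <= 1 -> 0 <= K -> 0 <= s ->
  (forall a D, 0 < D -> exists a' D', r * D <= D' /\
     reach n m rho s (aff a D C) (aff a' D' C) (D `^ s * K)) ->
  forall (N : nat) a D, 0 < D -> exists a' D', 0 < D' /\
     reach n m rho s (aff a D C) (aff a' D' C) (N%:R * (r ^+ N * D) `^ s * K).
Proof.
move=> /andP[r0 r1] K0 s0 H; elim=> [|N IH] a D D0.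
  exists a, D; split => //; apply: reach_weak (reach_refl _ _ _ _ _) _.
  by rewrite !mul0r.
have [a1 [D1 [hD1 hr1]]] := H a D D0.
have D10 : 0 < D1 by apply: lt_le_trans hD1; apply: mulr_gt0.
have [a' [D' [hD' hr2]]] := IH a1 D1 D10.
exists a', D'; split => //.
apply: reach_weak (reach_trans hr1 hr2) _.
have rN : 0 < r ^+ N by apply: exprn_gt0.
have x0 : 0 <= r ^+ N.+1 * D by apply: mulr_ge0; [apply: exprn_ge0; lra | lra].
have hx1 : (r ^+ N.+1 * D) `^ s <= D `^ s.
  apply: powR_le => //; rewrite exprS -mulrA.
  have : r ^+ N * D <= 1 * D by apply: ler_wpM2r; [lra | apply: exprn_ile1; lra].
  have : r * (r ^+ N * D) <= 1 * (r ^+ N * D) by apply: ler_wpM2r; [apply: mulr_ge0; lra | lra].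
  lra.
have hx2 : (r ^+ N.+1 * D) `^ s <= (r ^+ N * D1) `^ s.
  apply: powR_le => //; rewrite exprSr -mulrA; apply: ler_wpM2l; lra.
set X := (r ^+ N.+1 * D) `^ s in hx1 hx2 *.
rewrite -natr1 mulrDl mul1r mulrDl addrC.
apply: lerD; first by apply: ler_wpM2r.
rewrite -!mulrA; apply: ler_wpM2l => //; apply: ler_wpM2r => //.
Qed.

End Constr3.

Section Constr4.
Variable R : realType.

Lemma sorted_aff n a l (x : nat -> R) : 0 <= l -> sortedc n x -> sortedc n (aff a l x).
Proof. by move=> l0 sx i j ij jn; rewrite /aff lerD2l ler_wpM2l // sx. Qed.

Lemma S_bounds n (S : nat -> R) : sortedc n S -> S 0%N = 0 -> S n.-1 = 1 ->
  forall i, (i < n)%N -> 0 <= S i <= 1.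
Proof.
move=> sS S0 S1 i lt; apply/andP; split.
  by rewrite -S0; apply: sS.
by rewrite -S1; apply: sS => //; lia.
Qed.

Definition Cf n' (rho : R) (S : nat -> R) := ext n' (aff 0 (2 * rho) S) 1.

Lemma C_props n' (rho : R) S : (0 < n')%N -> 0 <= rho <= 2^-1 -> sortedc n' S ->
  S 0%N = 0 -> S n'.-1 = 1 ->
  [/\ sortedc n'.+1 (Cf n' rho S), (forall i, (i <= n')%N -> 0 <= Cf n' rho S i <= 1),
     Cf n' rho S n'.-1 = 2 * rho, Cf n' rho S 0%N = 0 & Cf n' rho S n' = 1].
Proof.
move=> n0 /andP[r0 r1] sS S0 S1.
have hb := S_bounds sS S0 S1.
split.
- apply: sorted_ext => //; first by apply: sorted_aff => //; lra.
  by rewrite /aff S1; lra.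
- move=> i ile; have [->|ne] := eqVneq i n'; first by rewrite /Cf ext_top ler01 lexx.
  rewrite /Cf ext_lt; last by lia.
  have [h0 h1] := andP (hb i ltac:(lia)).
  rewrite /aff add0r; apply/andP; split; first by apply: mulr_ge0; lra.
  have : 2 * rho * S i <= 2 * rho * 1 by apply: ler_wpM2l; lra.
  lra.
- by rewrite /Cf ext_lt ?/aff ?S1; [ring | lia].
- by rewrite /Cf ext_lt ?/aff ?S0; [ring | lia].
- by rewrite /Cf ext_top.
Qed.

Lemma phase n' m' rho s (S : nat -> R) p E : (0 < n')%N -> 0 < rho -> rho <= 2^-1 -> 0 < s ->
  sortedc n' S -> S 0%N = 0 -> S n'.-1 = 1 -> reach n' m' rho s S (constf p) E ->
  forall a D, 0 < D -> exists a' D', (1 - 3 * rho) * D <= D' /\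
    reach n'.+1 m'.+1 rho s (aff a D (Cf n' rho S)) (aff a' D' (Cf n' rho S))
      (D `^ s * ((2 * rho) `^ s * E)).
Proof.
move=> n0 r0 r1 s0 sS S0 S1 hr a D D0.
have hr01 : 0 <= rho <= 1 by apply/andP; split; lra.
have hr02 : 0 <= rho <= 2^-1 by apply/andP; split; lra.
have hp : p <= 1 by have := reach_top n0 hr01 hr; rewrite /constf S1.
have l0 : 0 < D * (2 * rho) by apply: mulr_gt0 => //; lra.
have h1 := reach_aff a l0 hr.
have eq1 : aff a (D * (2 * rho)) (constf p) = constf (a + D * (2 * rho) * p).
  by apply/funext => i.
rewrite eq1 in h1.
have s0' : s != 0 by rewrite gt_eqF.
have hq : aff a (D * (2 * rho)) S n'.-1 <= a + D.
  rewrite /aff S1 mulr1 lerD2l.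
  have : D * (2 * rho) <= D * 1 by apply: ler_wpM2l; lra.
  lra.
have h2 := reach_ext n0 hr01 s0' h1 hq.
have [sC CB C2 C0 C1] := C_props n0 hr02 sS S0 S1.
set P := a + D * (2 * rho) * p in h2 *.
set q := a + D in h2 hq *.
have Dp : D * rho * p <= D * rho * 1 by apply: ler_wpM2l => //; apply: mulr_ge0; lra.
have hPq : P <= q.
  rewrite /P /q lerD2l.
  have : D * rho <= D * 2^-1 by apply: ler_wpM2l; lra.
  lra.
have st := stepc_refresh (m := m'.+1) n0 (isT : (1 <= m'.+1)%N) hr02 hPq sC CB
   ltac:(by rewrite C2 lexx).
exists P, ((1 - rho) * (q - P)); split.
  rewrite /q /P.
  have : (1 - rho) * (D * rho * p) <= (1 - rho) * (D * rho * 1) by apply: ler_wpM2l; lra.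
  have : 0 <= D * rho * rho by apply: mulr_ge0; [apply: mulr_ge0|]; lra.
  nra.
have eqC : aff a D (Cf n' rho S) = ext n' (aff a (D * (2 * rho)) S) q.
  apply/funext => i; rewrite /Cf /ext /aff /q; case: ifP => _; [by rewrite mulr1 | by rewrite add0r mulrA].
rewrite eqC.
have h3 := reach_trans h2 (reach_one s st).
apply: reach_weak h3 _.
rewrite [(D * _) `^ s]powRM; [|lra|lra].
rewrite mulrA lerDl; exact: benergy_ge0.
Qed.

End Constr4.

Section Constr5.
Variable R : realType.

Definition good n m (rho s E : R) := exists S p, sortedc n S /\ S 0%N = 0 /\ S n.-1 = 1 /\
  reach n m rho s S (constf p) E.

Lemma good_weak n m (rho s E E' : R) : good n m rho s E -> E' <= E -> good n m rho s E'.
Proof.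
move=> [S [p [h1 [h2 [h3 h4]]]]] le; exists S, p; do 3 split => //.
exact: reach_weak h4 le.
Qed.

Lemma good_of_iter n m (rho s : R) (C : nat -> R) (r K Bd : R) : (0 < n)%N -> (1 <= m)%N ->
  0 <= rho <= 2^-1 -> sortedc n C -> C 0%N = 0 -> C n.-1 = 1 -> 0 < r <= 1 -> 0 <= K ->
  0 <= s ->
  (forall a D, 0 < D -> exists a' D', r * D <= D' /\
     reach n m rho s (aff a D C) (aff a' D' C) (D `^ s * K)) ->
  (exists N : nat, Bd <= N%:R * (r ^+ N) `^ s) ->
  good n m rho s (Bd * K).
Proof.
move=> n0 m1 hr sC C0 C1 hr1 K0 s0 Hph [N hN].
have [a' [D' [D'0 hr2]]] := iterate hr1 K0 s0 Hph N 0 ltr01.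
have eq0 : aff 0 1 C = C by apply/funext => i; rewrite /aff add0r mul1r.
rewrite eq0 mulr1 in hr2.
have sC' : sortedc n (aff a' D' C) by apply: sorted_aff => //; exact: ltW.
have st := stepc_collapse n0 m1 hr sC'.
exists C, ((1 - rho) * aff a' D' C 0%N + rho * aff a' D' C n.-1).
do 3 split => //.
apply: reach_weak (reach_trans hr2 (reach_one s st)) _.
have : Bd * K <= N%:R * (r ^+ N) `^ s * K by apply: ler_wpM2r.
have := benergy_ge0 s (aff a' D' C) [:: (0%N, n.-1)].
lra.
Qed.

Lemma good_step n' m' (rho s E : R) : (0 < n')%N -> 0 < rho -> rho <= 8^-1 -> 0 < s ->
  s * (3 * rho) <= 2^-1 -> 0 <= E -> good n' m' rho s E ->
  good n'.+1 m'.+1 rho s (expR (-2) / (2 * s * (3 * rho)) * ((2 * rho) `^ s * E)).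
Proof.
move=> n0 r0 r1 s0 sr E0 [S [p [sS [S0 [S1 hr]]]]].
have r2 : rho <= 2^-1 by lra.
have hr02 : 0 <= rho <= 2^-1 by apply/andP; split; lra.
have Hph := phase n0 r0 r2 s0 sS S0 S1 hr.
have K0 : 0 <= (2 * rho) `^ s * E by apply: mulr_ge0 => //; exact: powR_ge0.
have [sC CB C2 C0 C1] := C_props n0 hr02 sS S0 S1.
apply: (good_of_iter (C := Cf n' rho S) (r := 1 - 3 * rho)) => //.
- by apply/andP; split; lra.
- exact: ltW.
- apply: geo_bound => //; apply/andP; split; lra.
Qed.

End Constr5.

Section Constr6.
Variable R : realType.

Definition Lb (rho : R) (n : nat) (i : nat) : R := if i == 0%N then 0 else rho ^+ ((n./2) - i).
Definition Xb (rho : R) (n : nat) (i : nat) : R :=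
  if (i.*2.+1 < n)%N then Lb rho n i
  else if i.*2.+1 == n then 2^-1 else 1 - Lb rho n (n.-1 - i).

Lemma Lb_bounds (rho : R) (n : nat) (r0 : 0 < rho) (r1 : rho <= 8^-1) (n2 : (2 <= n)%N) i : (i.*2.+1 < n)%N -> 0 <= Lb rho n i <= rho.
Proof.
move=> h; rewrite /Lb; case: eqP => [_|i0]; first by apply/andP; split; lra.
have e : ((n./2) - i = ((n./2) - i).-1.+1)%N by lia.
rewrite e exprS; apply/andP; split.
  by apply: mulr_ge0; [lra | apply: exprn_ge0; lra].
have : rho ^+ ((n./2) - i).-1 <= 1 by apply: exprn_ile1; lra.
have : 0 <= rho ^+ ((n./2) - i).-1 by apply: exprn_ge0; lra.
nra.
Qed.

Lemma Xb_left (rho : R) (n : nat) (r0 : 0 < rho) (r1 : rho <= 8^-1) (n2 : (2 <= n)%N) i : (i.*2.+1 < n)%N -> Xb rho n i = Lb rho n i.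
Proof. by move=> h; rewrite /Xb h. Qed.

Lemma Xb_sym (rho : R) (n : nat) (r0 : 0 < rho) (r1 : rho <= 8^-1) (n2 : (2 <= n)%N) i : (i < n)%N -> Xb rho n (n.-1 - i) = 1 - Xb rho n i.
Proof.
move=> lt; rewrite /Xb.
have [h|h] := ltnP i.*2.+1 n.
  have -> : ((n.-1 - i).*2.+1 < n)%N = false by lia.
  have -> : ((n.-1 - i).*2.+1 == n) = false by apply/eqP; lia.
  by have -> : (n.-1 - (n.-1 - i) = i)%N by lia.
have [e|ne] := eqVneq i.*2.+1 n.
  have -> : ((n.-1 - i).*2.+1 < n)%N = false by lia.
  have -> : ((n.-1 - i).*2.+1 == n) = true by apply/eqP; lia.
  lra.
have -> : ((n.-1 - i).*2.+1 < n)%N = true by lia.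
lra.
Qed.

Lemma Xb_lo (rho : R) (n : nat) (r0 : 0 < rho) (r1 : rho <= 8^-1) (n2 : (2 <= n)%N) i : (i < n)%N -> ~~ (i.*2.+1 < n)%N -> 2^-1 <= Xb rho n i <= 1.
Proof.
move=> lt /negbTE h; rewrite /Xb h; case: eqP => ne; first by apply/andP; split; lra.
have := (@Lb_bounds rho n r0 r1 n2 (n.-1 - i)) ltac:(move: lt ne h; clear => lt ne /negbT; rewrite -leqNgt; lia).
move=> /andP[]; lra.
Qed.

Lemma Xb_bounds (rho : R) (n : nat) (r0 : 0 < rho) (r1 : rho <= 8^-1) (n2 : (2 <= n)%N) i : (i < n)%N -> 0 <= Xb rho n i <= 1.
Proof.
move=> lt; have [h|h] := boolP (i.*2.+1 < n)%N.
  by rewrite (Xb_left r0 r1 n2) //; have := (Lb_bounds r0 r1 n2 h) => /andP[]; lra.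
by have := (Xb_lo r0 r1 n2 lt) h => /andP[]; lra.
Qed.

Lemma Xb0 (rho : R) (n : nat) (r0 : 0 < rho) (r1 : rho <= 8^-1) (n2 : (2 <= n)%N) : Xb rho n 0%N = 0.
Proof. by rewrite (Xb_left r0 r1 n2) /Lb //; lia. Qed.

Lemma Xb_top (rho : R) (n : nat) (r0 : 0 < rho) (r1 : rho <= 8^-1) (n2 : (2 <= n)%N) : Xb rho n n.-1 = 1.
Proof.
have := (@Xb_sym rho n r0 r1 n2 (0%N)) ltac:(lia); rewrite subn0 (Xb0 r0 r1 n2); lra.
Qed.

Lemma Xb_cons_left (rho : R) (n : nat) (r0 : 0 < rho) (r1 : rho <= 8^-1) (n2 : (2 <= n)%N) j : (j.+1.*2.+1 < n)%N -> Xb rho n j <= Xb rho n j.+1.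
Proof.
move=> h; rewrite !(Xb_left r0 r1 n2) //; last by lia.
rewrite /Lb; case: eqP => [_|j0].
  by have := (Lb_bounds r0 r1 n2 h); rewrite /Lb /= => /andP[].
have e : ((n./2) - j = ((n./2) - j.+1).+1)%N by lia.
rewrite e exprS.
have : 0 <= rho ^+ ((n./2) - j.+1) by apply: exprn_ge0; lra.
move=> hp; have : rho * rho ^+ (n./2 - j.+1) <= 1 * rho ^+ (n./2 - j.+1) by apply: ler_wpM2r =>//; lra.
by rewrite mul1r.
Qed.

Lemma Xb_cons (rho : R) (n : nat) (r0 : 0 < rho) (r1 : rho <= 8^-1) (n2 : (2 <= n)%N) j : (j.+1 < n)%N -> Xb rho n j <= Xb rho n j.+1.
Proof.
move=> lt; have [h|h] := boolP (j.+1.*2.+1 < n)%N; first exact: (Xb_cons_left r0 r1 n2).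
have [h'|h'] := boolP (j.*2.+1 < n)%N.
  rewrite (Xb_left r0 r1 n2) // ; have := (Lb_bounds r0 r1 n2 h') => /andP[_ hl].
  by have := (Xb_lo r0 r1 n2 lt) h => /andP[hx _]; lra.
have [e|ne] := eqVneq j.*2.+1 n.
  have -> : Xb rho n j = 2^-1 by rewrite /Xb (negbTE h') e eqxx.
  by have := (Xb_lo r0 r1 n2 lt) h => /andP[]; lra.
have e1 : Xb rho n j = 1 - Xb rho n (n.-1 - j).
  have := (@Xb_sym rho n r0 r1 n2 (n.-1 - j)) ltac:(lia); rewrite subKn; [lra | lia].
have e2 : Xb rho n j.+1 = 1 - Xb rho n (n.-1 - j.+1).
  have := (@Xb_sym rho n r0 r1 n2 (n.-1 - j.+1)) ltac:(lia); rewrite subKn; [lra | lia].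
rewrite e1 e2.
have -> : (n.-1 - j = (n.-1 - j.+1).+1)%N by lia.
have := (@Xb_cons_left rho n r0 r1 n2 ((n.-1 - j.+1)%N)) ltac:(move: lt h' ne; clear; lia).
lra.
Qed.

Lemma Xb_sorted (rho : R) (n : nat) (r0 : 0 < rho) (r1 : rho <= 8^-1) (n2 : (2 <= n)%N) : sortedc n (Xb rho n).
Proof.
move=> i j ij jn; elim: j ij jn => [|j IH] ij jn.
  by have -> : i = 0%N by lia.
have [e|lt] := eqVneq i j.+1; first by rewrite e.
apply: le_trans (IH _ _) (Xb_cons r0 r1 n2 _); lia.
Qed.

Definition bb (rho : R) (n : nat) : R := rho ^+ n./2.

Lemma b_bounds (rho : R) (n : nat) (r0 : 0 < rho) (r1 : rho <= 8^-1) (n2 : (2 <= n)%N) : 0 < (bb rho n) <= rho.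
Proof.
rewrite /bb; have e : ((n./2) = (n./2).-1.+1)%N by lia.
rewrite e exprS; apply/andP; split.
  by apply: mulr_gt0 => //; apply: exprn_gt0.
have : rho ^+ (n./2).-1 <= 1 by apply: exprn_ile1; lra.
have : 0 <= rho ^+ (n./2).-1 by apply: exprn_ge0; lra.
nra.
Qed.

Lemma Xb1 (rho : R) (n : nat) (r0 : 0 < rho) (r1 : rho <= 8^-1) (n2 : (2 <= n)%N) : Xb rho n 1%N <= rho ^+ (n./2).-1.
Proof.
have [h|h] := boolP (3 < n)%N.
  rewrite (Xb_left r0 r1 n2) // /Lb /=; have -> : ((n./2) - 1 = (n./2).-1)%N by lia.
  done.
have k1 : (n./2) = 1%N by lia.
rewrite k1 expr0; have := (@Xb_bounds rho n r0 r1 n2 (1%N)) ltac:(lia); case/andP => //.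
Qed.

Lemma Xb_lower (rho : R) (n : nat) (r0 : 0 < rho) (r1 : rho <= 8^-1) (n2 : (2 <= n)%N) j : (j < n)%N -> rho * Xb rho n (minn j.+1 n.-1) <= (bb rho n) + (1 - 2 * (bb rho n)) * Xb rho n j.
Proof.
move=> lt; have [hb0 hb1] := andP (b_bounds r0 r1 n2).
have [e|ne] := eqVneq j n.-1.
  rewrite e (_ : minn n.-1.+1 n.-1 = n.-1); last by lia.
  rewrite (Xb_top r0 r1 n2); lra.
rewrite (_ : minn j.+1 n.-1 = j.+1); last by lia.
have [x0 x1] := andP ((@Xb_bounds rho n r0 r1 n2 (j.+1)) ltac:(lia)).
have [h|h] := boolP (j.*2.+1 < n)%N; last first.
  have [y0 y1] := andP ((Xb_lo r0 r1 n2 lt) h).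
  have : (1 - 2 * (bb rho n)) * 2^-1 <= (1 - 2 * (bb rho n)) * Xb rho n j by apply: ler_wpM2l; lra.
  have : rho * Xb rho n j.+1 <= rho * 1 by apply: ler_wpM2l; lra.
  lra.
have [e0|j0] := eqVneq j 0%N.
  rewrite e0 (Xb0 r0 r1 n2) mulr0 addr0.
  have : rho * Xb rho n 1 <= rho * rho ^+ (n./2).-1 by apply: ler_wpM2l; [lra | exact: (Xb1 r0 r1 n2)].
  have -> : rho * rho ^+ (n./2).-1 = (bb rho n) by rewrite /bb -exprS; congr (_ ^+ _); lia.
  done.
have [z0 z1] := andP (Lb_bounds r0 r1 n2 h).
rewrite [Xb rho n j](Xb_left r0 r1 n2 h).
have hx : Lb rho n j <= (bb rho n) + (1 - 2 * (bb rho n)) * Lb rho n j.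
  have : (bb rho n) * Lb rho n j <= (bb rho n) * 2^-1 by apply: ler_wpM2l; lra.
  lra.
apply: (le_trans _ hx).
rewrite /Lb (negbTE j0).
have [h2|h2] := boolP (j.+1.*2.+1 < n)%N.
  rewrite (Xb_left r0 r1 n2) // /Lb /=.
  have -> : ((n./2) - j = ((n./2) - j.+1).+1)%N by lia.
  by rewrite exprS.
have -> : ((n./2) - j = 1)%N by move: h h2; clear; lia.
have : rho * Xb rho n j.+1 <= rho * 1 by apply: ler_wpM2l; lra.
lra.
Qed.

Lemma base_step (rho : R) (n : nat) (r0 : 0 < rho) (r1 : rho <= 8^-1) (n2 : (2 <= n)%N) : stepc n 1 rho (Xb rho n) [:: (0%N, n.-1)] (aff (bb rho n) (1 - 2 * (bb rho n)) (Xb rho n)).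
Proof.
have [hb0 hb1] := andP (b_bounds r0 r1 n2).
split; first exact: (Xb_sorted r0 r1 n2).
split; first by apply: sorted_aff; [lra | exact: (Xb_sorted r0 r1 n2)].
split; first by apply: part_full; lia.
move=> bl i; rewrite inE => /eqP -> /= hi.
rewrite (Xb0 r0 r1 n2) (Xb_top r0 r1 n2) /aff; split.
  by have := (@Xb_lower rho n r0 r1 n2 (i)) ltac:(lia); lra.
move Ej : (n.-1 - i)%N => j.
have ei : i = (n.-1 - j)%N by lia.
have hj := (@Xb_lower rho n r0 r1 n2 (j)) ltac:(lia).
have e1 : Xb rho n i = 1 - Xb rho n j by rewrite ei (Xb_sym r0 r1 n2) //; lia.
have e2 : Xb rho n (maxn i.-1 0) = 1 - Xb rho n (minn j.+1 n.-1).
  rewrite -(Xb_sym r0 r1 n2); last by lia.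
  by congr (Xb rho n _); lia.
rewrite e1 e2; lra.
Qed.

End Constr6.

Section Constr7.
Variable R : realType.

Lemma good_base (rho s : R) n : 0 < rho -> rho <= 8^-1 -> (2 <= n)%N -> 0 < s ->
  s * (2 * bb rho n) <= 2^-1 ->
  good n 1 rho s (expR (-2) / (2 * s * (2 * bb rho n)) * 1).
Proof.
move=> r0 r1 n2 s0 sb.
have [hb0 hb1] := andP (b_bounds r0 r1 n2).
apply: (good_of_iter (C := Xb rho n) (r := 1 - 2 * bb rho n)).
- exact: ltnW n2.
- done.
- by apply/andP; split; lra.
- exact: Xb_sorted.
- exact: Xb0.
- exact: Xb_top.
- by apply/andP; split; lra.
- lra.
- exact: ltW.
- move=> a D D0.
  have st := stepc_aff a D0 (base_step r0 r1 n2).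
  exists (a + D * bb rho n), (D * (1 - 2 * bb rho n)); split; first by rewrite mulrC.
  have eq : aff a D (aff (bb rho n) (1 - 2 * bb rho n) (Xb rho n)) =
            aff (a + D * bb rho n) (D * (1 - 2 * bb rho n)) (Xb rho n).
    by apply/funext => i; rewrite /aff; ring.
  rewrite eq in st.
  apply: reach_weak (reach_one s st) _.
  rewrite (benergy_aff a s D0 (base_step r0 r1 n2)) /benergy big_seq1 /=.
  by rewrite (Xb_top r0 r1 n2) (Xb0 r0 r1 n2) subr0 powR1.
- apply: geo_bound => //; apply/andP; split; lra.
Qed.

Definition cst : R := expR (-3) / 6.

Lemma main_ind (rho s : R) : 0 < rho -> rho <= 8^-1 -> 0 < s ->
  s * ln (rho^-1) <= 1 -> forall m, (1 <= m)%N -> forall n, (m < n)%N ->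
  good n m rho s ((cst / s) ^+ m * (rho^-1) ^+ ((n + m - 1)./2)).
Proof.
move=> r0 r1 s0 sl.
have rinv : 1 < rho^-1 by rewrite invf_gt1 //; lra.
have L0 : 0 < ln (rho^-1) by apply: ln_gt0.
have lnr : ln (rho^-1) = - ln rho by rewrite lnV ?posrE.
have hl : ln rho <= rho - 1 by apply: ln_le_sub1.
have s8 : s * (7 / 8) <= 1.
  have : s * (7 / 8) <= s * ln (rho^-1) by apply: ler_wpM2l; lra.
  lra.
have s3 : s * (3 * rho) <= 2^-1.
  have : s * (3 * rho) <= s * (3 / 8) by apply: ler_wpM2l; lra.
  lra.
have c0 : 0 < cst by rewrite /cst; apply: divr_gt0 => //; exact: expR_gt0.
have e2r : expR (-1) <= (2 * rho) `^ s.
  have : rho `^ s <= (2 * rho) `^ s by apply: powR_le; lra.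
  suff : expR (-1) <= rho `^ s by lra.
  rewrite /powR gt_eqF // ler_expR.
  have : s * ln (rho^-1) = - (s * ln rho) by rewrite lnr; ring.
  lra.
elim=> [//|m IH] _ n ltn.
have [m0|mpos] := eqVneq m 0%N.
  subst m; rewrite expr1 addnK.
  have sb : s * (2 * bb rho n) <= 2^-1.
    have [hb0 hb1] := andP (b_bounds r0 r1 (ltn : (2 <= n)%N)).
    have : s * (2 * bb rho n) <= s * (3 * rho) by apply: ler_wpM2l; lra.
    lra.
  apply: good_weak (good_base r0 r1 (ltn : (2 <= n)%N) s0 sb) _.
  have [hb0 hb1] := andP (b_bounds r0 r1 (ltn : (2 <= n)%N)).
  rewrite exprVn /bb; rewrite /bb in hb0 hb1.
  set u := rho ^+ n./2 in hb0 hb1 *.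
  have -> : cst / s * u^-1 = expR (-3) / 6 * (s * u)^-1.
    by rewrite /cst; field; apply/andP; split; rewrite gt_eqF.
  have -> : expR (-2) / (2 * s * (2 * u)) * 1 = expR (-2) / 4 * (s * u)^-1.
    by field; apply/andP; split; rewrite gt_eqF.
  apply: ler_wpM2r; first by rewrite invr_ge0; apply: mulr_ge0; lra.
  have : expR (-3) <= expR (-2) :> R by rewrite ler_expR; lra.
  have := expR_gt0 (-3 : R).
  lra.
case: n ltn => [//|n'] ltn.
have m1' : (1 <= m)%N by rewrite lt0n.
have n'0 : (0 < n')%N by move: ltn m1'; clear; lia.
have IH' := IH m1' n' (ltn : (m < n')%N).
set E := (cst / s) ^+ m * rho^-1 ^+ ((n' + m - 1)./2) in IH'.
have E0 : 0 <= E.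
  by rewrite /E; apply: mulr_ge0; apply: exprn_ge0; [apply: divr_ge0; lra | rewrite invr_ge0; lra].
have := good_step n'0 r0 r1 s0 s3 E0 IH'.
move/good_weak; apply.
have -> : ((n'.+1 + m.+1 - 1)./2 = ((n' + m - 1)./2).+1)%N by move: m1'; clear; lia.
have -> : (cst / s) ^+ m.+1 * rho^-1 ^+ ((n' + m - 1)./2).+1 = cst / s * rho^-1 * E.
  by rewrite /E !exprS; ring.
rewrite [X in _ <= X]mulrA.
apply: ler_wpM2r => //.
have -> : cst / s * rho^-1 = expR (-3) * (6 * s * rho)^-1.
  by rewrite /cst; field; apply/andP; split; rewrite gt_eqF.
have -> : expR (-2) / (2 * s * (3 * rho)) * (2 * rho) `^ s =
          expR (-2) * (2 * rho) `^ s * (6 * s * rho)^-1.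
  by field; apply/andP; split; rewrite gt_eqF.
apply: ler_wpM2r; first by rewrite invr_ge0; apply: mulr_ge0; [apply: mulr_ge0|]; lra.
have -> : (-3 : R) = -2 + -1 by ring.
rewrite expRD; apply: ler_wpM2l => //; exact: ltW (expR_gt0 _).
Qed.

End Constr7.

Unset Implicit Arguments.
Theorem theorem7 (R : realType) :
  exists (c rho0 : R), 0 < c /\ 0 < rho0 <= 2^-1 /\
  forall (rho : R) (n m : nat) (s : R),
    0 < rho <= rho0 -> (2 <= n)%N -> (1 <= m <= n - 1)%N ->
    0 < s <= (m%:R * ln (rho^-1))^-1 ->
    (((c / s) ^+ m * (rho^-1) ^+ ((n + m - 1)./2))%:E
       <= twist_energy_sup n m rho s)%E.
Proof.
exists (cst R), 8^-1; split.
  by rewrite /cst; apply: divr_gt0 => //; exact: expR_gt0.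
split; first by apply/andP; split; lra.
move=> rho n m s /andP[r0 r1] n2 /andP[m1 mn] /andP[s0 sb].
have rinv : 1 < rho^-1 by rewrite invf_gt1 //; lra.
have L0 : 0 < ln (rho^-1) by apply: ln_gt0.
have mR : 1 <= (m%:R : R) by rewrite ler1n.
have mL : 0 < m%:R * ln (rho^-1) by apply: mulr_gt0 => //; lra.
have sl : s * ln (rho^-1) <= 1.
  have h1 : s * (m%:R * ln (rho^-1)) <= 1.
    by have := ler_wpM2r (ltW mL) sb; rewrite mulVf // lt0r_neq0.
  have : s * ln (rho^-1) <= s * (m%:R * ln (rho^-1)).
    rewrite [m%:R * _]mulrC; apply: ler_wpM2l; first lra.
    by rewrite -[X in X <= _]mulr1 ler_wpM2l //; lra.
  lra.
have [S [p [sS [S0 [S1 hr]]]]] := main_ind r0 r1 s0 sl m1 (ltac:(move: mn n2; clear; lia) : (m < n)%N).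
have [X [Bs [tw [X0 hE]]]] := reach_system (ltnW n2) m1 hr.
apply: le_trans hE _.
apply: ereal_sup_ubound; exists X, Bs; split => //; split => //.
move=> i ilt; rewrite X0; exact: S_bounds sS S0 S1 i ilt.
Qed.
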